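(* Let $k\ge4$ be an integer. In each of the cases (C1) $\eta\in[\pi/k,\eta_k)$ and $j\in\{k+1,\dots,2k-3\}$, and (C2) $\eta\in[\eta_{k+1},\pi/k)$ and $j\in\{k+1,\dots,2k-1\}$, we have $z_j\in\mathrm{co}(\{0,z_{j-1},w_1,1\})$ and $w_j\in\mathrm{co}(\{1,w_{j-1},b_0,a\})$.
   Context: For $\eta\in(0,\pi/3)$ let $a=\frac{e^{-i\eta}}{2\cos\eta}$, $c=\frac{1}{1-|a|^4}$, and for integers $j\ge0$ put $z_j=ca^{j+1}$, $w_j=1-c|a|^2a^j$, $b_0=a+c|a|^4$. For integers $k\ge1$ let $\Phi_k(\eta)=(1-|a|^4)\sin((k-1)\eta)-|a|^3\sin((k-2)\eta)+|a|^k\sin\eta$; for each $k\ge4$, $\Phi_k$ has a unique zero in $(\pi/k,\pi/(k-1))$, denoted $\eta_k$. $\mathrm{co}$ denotes convex hull. *)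

(* Defs.v *)
From Stdlib Require Import Reals.
From Coquelicot Require Import Coquelicot.
Open Scope R_scope.

(* a = e^{-i eta} / (2 cos eta), with e^{-i eta} = cos eta - i sin eta *)
Definition a_ (eta : R) : C :=
  Cdiv (cos eta, - sin eta) (RtoC (2 * cos eta)).

Definition c_ (eta : R) : R := 1 / (1 - (Cmod (a_ eta)) ^ 4).

Definition z_ (eta : R) (j : nat) : C :=
  Cmult (RtoC (c_ eta)) (Cpow (a_ eta) (j + 1)).

Definition w_ (eta : R) (j : nat) : C :=
  Cminus (RtoC 1) (Cmult (RtoC (c_ eta * (Cmod (a_ eta)) ^ 2)) (Cpow (a_ eta) j)).

Definition b0_ (eta : R) : C :=
  Cplus (a_ eta) (RtoC (c_ eta * (Cmod (a_ eta)) ^ 4)).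

Definition Phi (k : nat) (eta : R) : R :=
  (1 - (Cmod (a_ eta)) ^ 4) * sin ((INR k - 1) * eta)
  - (Cmod (a_ eta)) ^ 3 * sin ((INR k - 2) * eta)
  + (Cmod (a_ eta)) ^ k * sin eta.

Definition in_co4 (z p1 p2 p3 p4 : C) : Prop :=
  exists t1 t2 t3 t4 : R,
    0 <= t1 /\ 0 <= t2 /\ 0 <= t3 /\ 0 <= t4 /\ t1 + t2 + t3 + t4 = 1 /\
    z = Cplus (Cplus (Cplus (Cmult (RtoC t1) p1) (Cmult (RtoC t2) p2))
                     (Cmult (RtoC t3) p3)) (Cmult (RtoC t4) p4).

(* Main.v *)
Require Import Defs.
From Stdlib Require Import Reals Lra Lia Psatz.
From Coquelicot Require Import Coquelicot.
Open Scope R_scope.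

Definition sv (th : R) := / (2 * cos th).

Lemma a_eq th : cos th <> 0 -> a_ th = (sv th * cos th, - (sv th * sin th)).
Proof.
  intros H. unfold a_, sv, Cdiv, Cinv, Cmult, RtoC; simpl.
  f_equal; field; auto.
Qed.

Lemma sv_pos th : 0 < cos th -> 0 < sv th.
Proof. intros; unfold sv; apply Rinv_0_lt_compat; lra. Qed.

Lemma Cmod_a th : 0 < cos th -> Cmod (a_ th) = sv th.
Proof.
  intros H. rewrite a_eq by lra. unfold Cmod; cbn [fst snd].
  replace ((sv th * cos th) ^ 2 + (- (sv th * sin th)) ^ 2) with (sv th ^ 2)
    by (assert (E := sin2_cos2 th); unfold Rsqr in E;
        transitivity (sv th ^ 2 * (sin th * sin th + cos th * cos th)); [rewrite E; ring | ring]).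
  rewrite sqrt_pow2; auto. left; apply sv_pos; auto.
Qed.

Lemma Cpow_a th n : 0 < cos th ->
  Cpow (a_ th) n = (sv th ^ n * cos (INR n * th), - (sv th ^ n * sin (INR n * th))).
Proof.
  intros H. induction n.
  - simpl. rewrite Rmult_0_l, cos_0, sin_0. apply injective_projections; simpl; ring.
  - simpl Cpow. rewrite IHn, a_eq by lra. rewrite S_INR.
    replace ((INR n + 1) * th) with (INR n * th + th) by ring.
    rewrite cos_plus, sin_plus. unfold Cmult; simpl. f_equal; ring.
Qed.

Lemma c_eq th : 0 < cos th -> c_ th = / (1 - sv th ^ 4).
Proof. intros H. unfold c_. rewrite Cmod_a by auto. unfold Rdiv. ring. Qed.

Lemma z_eq th j : 0 < cos th ->
  z_ th j = (/ (1 - sv th ^ 4) * sv th ^ (j+1) * cos (INR (j+1) * th),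
             - (/ (1 - sv th ^ 4) * sv th ^ (j+1) * sin (INR (j+1) * th))).
Proof.
  intros H. unfold z_. rewrite Cpow_a by auto. fold (c_ th). rewrite c_eq by auto.
  unfold Cmult, RtoC; simpl. f_equal; ring.
Qed.

Lemma w_eq th j : 0 < cos th ->
  w_ th j = (1 - / (1 - sv th ^ 4) * sv th ^ 2 * (sv th ^ j * cos (INR j * th)),
             / (1 - sv th ^ 4) * sv th ^ 2 * (sv th ^ j * sin (INR j * th))).
Proof.
  intros H. unfold w_. rewrite Cpow_a by auto. rewrite ?Cmod_a by auto; fold (c_ th); rewrite ?c_eq by auto.
  unfold Cminus, Cplus, Copp, Cmult, RtoC; simpl. f_equal; ring.
Qed.

Lemma b0_eq th : 0 < cos th ->
  b0_ th = (sv th * cos th + / (1 - sv th ^ 4) * sv th ^ 4, - (sv th * sin th)).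
Proof.
  intros H. unfold b0_. rewrite ?Cmod_a by auto; fold (c_ th); rewrite ?c_eq by auto. rewrite a_eq by lra.
  unfold Cplus, RtoC; simpl. f_equal; ring.
Qed.

Lemma bary0 (ux uy vx vy px py : R) :
  ux * vy - uy * vx < 0 ->
  px * vy - py * vx <= 0 ->
  ux * py - uy * px <= 0 ->
  (ux - px) * (vy - py) - (uy - py) * (vx - px) <= 0 ->
  exists l m, 0 <= l /\ 0 <= m /\ l + m <= 1 /\
    px = l * ux + m * vx /\ py = l * uy + m * vy.
Proof.
  intros H1 H2 H3 H4. set (X := ux * vy - uy * vx) in *.
  assert (HX : X <> 0) by lra.
  set (l := (px * vy - py * vx) / X). set (m := (ux * py - uy * px) / X).
  assert (El : l * X = px * vy - py * vx) by (unfold l; field; auto).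
  assert (Em : m * X = ux * py - uy * px) by (unfold m; field; auto).
  exists l, m.
  split; [nra|split; [nra|split; [|split]]].
  - assert ((1 - l - m) * X = (ux - px) * (vy - py) - (uy - py) * (vx - px)) by
      (replace ((1 - l - m) * X) with (X - l * X - m * X) by ring; rewrite El, Em; unfold X; ring).
    nra.
  - apply (Rmult_eq_reg_r X); auto. unfold l, m, X in *. field. auto.
  - apply (Rmult_eq_reg_r X); auto. unfold l, m, X in *. field. auto.
Qed.

Definition ff (th s x : R) := (1 - s ^ 4) * sin x - s ^ 3 * sin (x - th).

Lemma sum_sin y th : sin (y + th) + sin (y - th) = 2 * sin y * cos th.
Proof. rewrite sin_plus, sin_minus; ring. Qed.

Lemma ff_key th s x : 2 * s * cos th = 1 ->
  s * (ff th s (x + th) + ff th s (x - th)) = ff th s x.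
Proof.
  intros Hs. unfold ff.
  replace (x + th - th) with x by ring.
  replace (x - th - th) with ((x - th) - th) by ring.
  assert (E1 := sum_sin x th). assert (E2 := sum_sin (x - th) th).
  replace (x - th + th) with x in E2 by ring.
  transitivity ((1 - s^4) * (s * (sin (x + th) + sin (x - th))) - s^3 * (s * (sin x + sin (x - th - th)))).
  ring. rewrite E1, E2.
  transitivity ((1 - s^4) * sin x * (2 * s * cos th) - s^3 * sin (x - th) * (2 * s * cos th)). ring.
  rewrite Hs. ring.
Qed.

Lemma cff c s A B : c * (1 - s ^ 4) = 1 -> c * ((1 - s ^ 4) * A - s ^ 3 * B) = A - c * s ^ 3 * B.
Proof. intros H. transitivity ((c * (1 - s ^ 4)) * A - c * s ^ 3 * B); [ring | rewrite H; ring]. Qed.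

Definition Wp th s := (1 - / (1 - s ^ 4) * s ^ 3 * cos th, / (1 - s ^ 4) * s ^ 3 * sin th).

Lemma inZW th s r x : 2 * s * cos th = 1 -> 0 < s -> s ^ 4 < 1 -> 0 < r -> 0 <= sin th ->
  ff th s x < 0 -> ff th s (x + th) <= 0 ->
  ff th s (x - th) + r * (1 - s ^ 4) * sin th <= 0 ->
  in_co4 (r * s * cos (x + th), - (r * s * sin (x + th))) (RtoC 0)
         (r * cos x, - (r * sin x)) (Wp th s) (RtoC 1).
Proof.
  intros Hs Hs0 Hs4 Hr Hsin H1 H2 H3.
  set (c := / (1 - s ^ 4)).
  assert (Hc : c * (1 - s ^ 4) = 1) by (unfold c; field; lra).
  assert (Hc0 : 0 < c) by (unfold c; apply Rinv_0_lt_compat; lra).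
  unfold Wp; fold c.
  destruct (bary0 (r * cos x) (- (r * sin x)) (1 - c * s ^ 3 * cos th) (c * s ^ 3 * sin th)
     (r * s * cos (x + th)) (- (r * s * sin (x + th)))) as (l & m & Hl & Hm & Hlm & E1 & E2).
  - replace (r * cos x * (c * s ^ 3 * sin th) - - (r * sin x) * (1 - c * s ^ 3 * cos th))
      with (r * (sin x - c * s^3 * (sin x * cos th - cos x * sin th))) by ring.
    rewrite <- sin_minus.
    replace (sin x - c * s ^ 3 * sin (x - th)) with (c * ff th s x)
      by (unfold ff; rewrite cff; auto).
    assert (0 < r * c) by nra. nra.
  - replace (r * s * cos (x + th) * (c * s ^ 3 * sin th) - - (r * s * sin (x + th)) * (1 - c * s ^ 3 * cos th))
      with (r * s * (sin (x + th) - c * s^3 * (sin (x + th) * cos th - cos (x + th) * sin th))) by ring.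
    rewrite <- sin_minus. replace (x + th - th) with x by ring.
    replace (sin (x + th) - c * s ^ 3 * sin x) with (c * ff th s (x + th))
      by (unfold ff; replace (x + th - th) with x by ring; rewrite cff; auto).
    assert (0 < r * s * c) by (apply Rmult_lt_0_compat; nra). nra.
  - replace (r * cos x * - (r * s * sin (x + th)) - - (r * sin x) * (r * s * cos (x + th)))
      with (- (r * r * s) * (sin (x + th) * cos x - cos (x + th) * sin x)) by ring.
    rewrite <- sin_minus. replace (x + th - x) with th by ring.
    assert (0 < r * r * s) by (apply Rmult_lt_0_compat; nra). nra.
  - assert (K := ff_key th s x Hs).
    replace ((r * cos x - r * s * cos (x + th)) * (c * s ^ 3 * sin th - - (r * s * sin (x + th))) -
      (- (r * sin x) - - (r * s * sin (x + th))) * (1 - c * s ^ 3 * cos th - r * s * cos (x + th)))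
      with (r * (sin x - c * s^3 * (sin x * cos th - cos x * sin th))
            - r * s * (sin (x + th) - c * s^3 * (sin (x + th) * cos th - cos (x + th) * sin th))
            + (r * r * s) * (sin (x + th) * cos x - cos (x + th) * sin x)) by ring.
    rewrite <- !sin_minus. replace (x + th - th) with x by ring. replace (x + th - x) with th by ring.
    replace (sin x - c * s ^ 3 * sin (x - th)) with (c * ff th s x)
      by (unfold ff; rewrite cff; auto).
    replace (sin (x + th) - c * s ^ 3 * sin x) with (c * ff th s (x + th))
      by (unfold ff; replace (x + th - th) with x by ring; rewrite cff; auto).
    rewrite <- K.
    replace (r * (c * (s * (ff th s (x + th) + ff th s (x - th)))) - r * s * (c * ff th s (x + th)) +
      r * r * s * sin th) with (r * s * c * (ff th s (x - th) + r * (1 - s ^ 4) * sin th))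
      by (transitivity (r * s * c * ff th s (x - th) + r * r * s * (c * (1 - s ^ 4)) * sin th);
          [ring | rewrite Hc; ring]).
    assert (0 < r * s * c) by (apply Rmult_lt_0_compat; nra). nra.
  - exists (1 - l - m), l, m, 0. repeat split; try lra.
    apply injective_projections; simpl; lra.
Qed.

Lemma sin_s th s x : 2 * s * cos th = 1 -> sin x - s * sin (x + th) = s * sin (x - th).
Proof.
  intros Hs. transitivity (sin x * (2 * s * cos th) - s * (sin (x + th) + sin (x - th)) + s * sin (x - th)).
  rewrite Hs; ring. rewrite sum_sin; ring.
Qed.

Lemma inZ1 th s r x : 2 * s * cos th = 1 -> 0 < s -> s ^ 4 < 1 -> 0 < r -> 0 <= sin th ->
  sin x < 0 -> sin (x + th) <= 0 -> sin (x - th) + r * sin th <= 0 ->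
  in_co4 (r * s * cos (x + th), - (r * s * sin (x + th))) (RtoC 0)
         (r * cos x, - (r * sin x)) (Wp th s) (RtoC 1).
Proof.
  intros Hs Hs0 Hs4 Hr Hsin H1 H2 H3.
  destruct (bary0 (r * cos x) (- (r * sin x)) 1 0
     (r * s * cos (x + th)) (- (r * s * sin (x + th)))) as (l & m & Hl & Hm & Hlm & E1 & E2).
  - nra.
  - assert (0 < r * s) by nra. nra.
  - replace (r * cos x * - (r * s * sin (x + th)) - - (r * sin x) * (r * s * cos (x + th)))
      with (- (r * r * s) * (sin (x + th) * cos x - cos (x + th) * sin x)) by ring.
    rewrite <- sin_minus. replace (x + th - x) with th by ring.
    assert (0 < r * r * s) by (apply Rmult_lt_0_compat; nra). nra.
  - replace ((r * cos x - r * s * cos (x + th)) * (0 - - (r * s * sin (x + th))) -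
      (- (r * sin x) - - (r * s * sin (x + th))) * (1 - r * s * cos (x + th)))
      with (r * (sin x - s * sin (x + th)) + (r * r * s) * (sin (x + th) * cos x - cos (x + th) * sin x)) by ring.
    rewrite <- sin_minus. replace (x + th - x) with th by ring. rewrite sin_s by auto.
    replace (r * (s * sin (x - th)) + r * r * s * sin th) with (r * s * (sin (x - th) + r * sin th)) by ring.
    assert (0 < r * s) by nra. nra.
  - exists (1 - l - m), l, 0, m. repeat split; try lra.
    apply injective_projections; simpl; lra.
Qed.

Lemma inW1 th s r x : 2 * s * cos th = 1 -> 0 < s -> s ^ 4 < 1 -> 0 < r -> 0 < sin th ->
  sin (x + th) <= 0 -> 0 <= ff th s (x + th) -> 0 <= sin th + r * s * sin x ->
  in_co4 (r * s * cos (x + th), - (r * s * sin (x + th))) (RtoC 0)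
         (r * cos x, - (r * sin x)) (Wp th s) (RtoC 1).
Proof.
  intros Hs Hs0 Hs4 Hr Hsin H1 H2 H3.
  set (c := / (1 - s ^ 4)).
  assert (Hc : c * (1 - s ^ 4) = 1) by (unfold c; field; lra).
  assert (Hc0 : 0 < c) by (unfold c; apply Rinv_0_lt_compat; lra).
  assert (Hcs : 0 < c * s ^ 3) by (apply Rmult_lt_0_compat; auto; apply pow_lt; auto).
  unfold Wp; fold c.
  destruct (bary0 (1 - c * s ^ 3 * cos th) (c * s ^ 3 * sin th) 1 0
     (r * s * cos (x + th)) (- (r * s * sin (x + th)))) as (l & m & Hl & Hm & Hlm & E1 & E2).
  - nra.
  - assert (0 < r * s) by nra. nra.
  - replace ((1 - c * s ^ 3 * cos th) * - (r * s * sin (x + th)) - c * s ^ 3 * sin th * (r * s * cos (x + th)))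
      with (- (r * s) * (sin (x + th) - c * s^3 * (sin (x + th) * cos th - cos (x + th) * sin th))) by ring.
    rewrite <- sin_minus. replace (x + th - th) with x by ring.
    replace (sin (x + th) - c * s ^ 3 * sin x) with (c * ff th s (x + th))
      by (unfold ff; replace (x + th - th) with x by ring; rewrite cff; auto).
    assert (0 < r * s * c) by (apply Rmult_lt_0_compat; nra). nra.
  - replace ((1 - c * s ^ 3 * cos th - r * s * cos (x + th)) * (0 - - (r * s * sin (x + th))) -
      (c * s ^ 3 * sin th - - (r * s * sin (x + th))) * (1 - r * s * cos (x + th)))
      with (- (c * s ^ 3) * sin th - (c * s^3) * (r * s) * (sin (x + th) * cos th - cos (x + th) * sin th)) by ring.
    rewrite <- sin_minus. replace (x + th - th) with x by ring.
    replace (- (c * s ^ 3) * sin th - c * s ^ 3 * (r * s) * sin x) with (- (c * s ^ 3) * (sin th + r * s * sin x)) by ring.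
    nra.
  - exists (1 - l - m), 0, l, m. repeat split; try lra.
    apply injective_projections; simpl; lra.
Qed.

Definition qc th : C := (sv th * cos th, sv th * sin th).

Lemma w_z th m : 0 < cos th -> w_ th m = Cminus (RtoC 1) (Cmult (qc th) (z_ th m)).
Proof.
  intros H. rewrite w_eq, z_eq by auto. unfold qc.
  replace (INR m * th) with (INR (m + 1) * th - th) by (rewrite plus_INR; simpl; ring).
  rewrite cos_minus, sin_minus.
  apply injective_projections; unfold Cminus, Cplus, Copp, Cmult, RtoC; cbn [fst snd];
    rewrite pow_add; ring.
Qed.

Lemma Wp_eq th : 0 < cos th -> w_ th 1 = Wp th (sv th).
Proof.
  intros H. rewrite w_eq by auto. unfold Wp. simpl INR. rewrite Rmult_1_l.
  apply injective_projections; cbn [fst snd]; ring.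
Qed.

Lemma b0_W th : 0 < cos th -> b0_ th = Cminus (RtoC 1) (Cmult (qc th) (Wp th (sv th))).
Proof.
  intros H. rewrite b0_eq by auto. unfold qc, Wp.
  assert (P : sin th ^ 2 + cos th ^ 2 = 1) by (rewrite <- (sin2_cos2 th); unfold Rsqr; ring).
  assert (Hs : 2 * sv th * cos th = 1) by (unfold sv; field; lra).
  set (c := / (1 - sv th ^ 4)). set (s := sv th) in *.
  apply injective_projections; unfold Cminus, Cplus, Copp, Cmult, RtoC; cbn [fst snd].
  - apply Rminus_diag_uniq.
    transitivity ((2 * s * cos th - 1) - c * s ^ 4 * (sin th ^ 2 + cos th ^ 2 - 1)). ring.
    rewrite Hs, P. ring.
  - apply Rminus_diag_uniq.
    transitivity (c * s ^ 4 * 0). 2: ring. ring.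
Qed.

Lemma a_1 th : 0 < cos th -> a_ th = Cminus (RtoC 1) (Cmult (qc th) (RtoC 1)).
Proof.
  intros H. rewrite a_eq by lra. unfold qc.
  assert (Hs : 2 * sv th * cos th = 1) by (unfold sv; field; lra).
  apply injective_projections; unfold Cminus, Cplus, Copp, Cmult, RtoC; cbn [fst snd]; lra.
Qed.

Lemma affine (q z p1 p2 p3 p4 : C) :
  in_co4 z p1 p2 p3 p4 ->
  in_co4 (Cminus (RtoC 1) (Cmult q z)) (Cminus (RtoC 1) (Cmult q p1)) (Cminus (RtoC 1) (Cmult q p2))
         (Cminus (RtoC 1) (Cmult q p3)) (Cminus (RtoC 1) (Cmult q p4)).
Proof.
  intros (t1 & t2 & t3 & t4 & H1 & H2 & H3 & H4 & Hs & Hz).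
  exists t1, t2, t3, t4. repeat split; auto.
  subst z. destruct q as [qx qy], p1 as [x1 y1], p2 as [x2 y2], p3 as [x3 y3], p4 as [x4 y4].
  replace t4 with (1 - t1 - t2 - t3) by lra.
  apply injective_projections; unfold Cminus, Cplus, Copp, Cmult, RtoC; cbn [fst snd]; ring.
Qed.

Lemma reduce th j : 0 < cos th -> (1 <= j)%nat ->
  in_co4 (/ (1 - sv th ^ 4) * sv th ^ j * sv th * cos (INR j * th + th),
          - (/ (1 - sv th ^ 4) * sv th ^ j * sv th * sin (INR j * th + th))) (RtoC 0)
         (/ (1 - sv th ^ 4) * sv th ^ j * cos (INR j * th),
          - (/ (1 - sv th ^ 4) * sv th ^ j * sin (INR j * th))) (Wp th (sv th)) (RtoC 1) ->
  in_co4 (z_ th j) (RtoC 0) (z_ th (j - 1)) (w_ th 1) (RtoC 1) /\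
  in_co4 (w_ th j) (RtoC 1) (w_ th (j - 1)) (b0_ th) (a_ th).
Proof.
  intros Hc Hj H.
  assert (Ez : z_ th j = (/ (1 - sv th ^ 4) * sv th ^ j * sv th * cos (INR j * th + th),
          - (/ (1 - sv th ^ 4) * sv th ^ j * sv th * sin (INR j * th + th)))).
  { rewrite z_eq by auto. rewrite plus_INR, pow_add. simpl INR.
    replace ((INR j + 1) * th) with (INR j * th + th) by ring.
    apply injective_projections; cbn [fst snd]; ring. }
  assert (Ez' : z_ th (j - 1) = (/ (1 - sv th ^ 4) * sv th ^ j * cos (INR j * th),
          - (/ (1 - sv th ^ 4) * sv th ^ j * sin (INR j * th)))).
  { rewrite z_eq by auto. replace (j - 1 + 1)%nat with j by lia. reflexivity. }
  assert (H1 : in_co4 (z_ th j) (RtoC 0) (z_ th (j - 1)) (w_ th 1) (RtoC 1)).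
  { rewrite Ez, Ez', Wp_eq by auto. exact H. }
  split; auto.
  rewrite (w_z th j), (w_z th (j - 1)), b0_W, a_1 by auto.
  replace (RtoC 1) with (Cminus (RtoC 1) (Cmult (qc th) (RtoC 0))) at 2
    by (apply injective_projections; unfold Cminus, Cplus, Copp, Cmult, RtoC; cbn [fst snd]; ring).
  rewrite <- Wp_eq by auto.
  apply affine. exact H1.
Qed.

Lemma s_num s : 0 < s -> s ^ 2 <= 1/2 ->
  s ^ 5 <= 1 - s ^ 4 /\ s ^ 5 <= s ^ 3 /\ s ^ 5 <= 1 - s ^ 2 - s ^ 4 /\ s ^ 4 < 1 /\ s < 1.
Proof.
  intros H0 H2.
  assert (Hs1 : s < 1) by nra.
  assert (H4 : s ^ 4 <= 1/4) by (replace (s^4) with ((s^2)^2) by ring; nra).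
  assert (Hs7 : s <= 3/4) by nra.
  assert (H5 : s ^ 5 <= 3/16) by (replace (s^5) with (s^4 * s) by ring; nra).
  assert (H3 : s ^ 5 <= s ^ 3) by (replace (s^5) with (s^3 * s^2) by ring;
     assert (0 < s^3) by (apply pow_lt; auto); nra).
  repeat split; lra.
Qed.

Lemma sin_2PI_minus y : sin (2 * PI - y) = - sin y.
Proof. rewrite sin_minus, sin_2PI, cos_2PI; ring. Qed.

Lemma sin_ge_mid th b : 0 < th <= PI / 2 -> th <= b <= PI - th -> sin th <= sin b.
Proof.
  intros H1 H2. destruct (Rle_dec b (PI / 2)).
  - apply sin_incr_1; lra.
  - rewrite <- (sin_PI_x b). apply sin_incr_1; lra.
Qed.

Lemma ff_bound th s x : 0 < th <= PI / 4 -> 2 * s * cos th = 1 -> 0 < s -> s ^ 2 <= 1/2 ->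
  PI <= x <= 2 * PI - th -> ff th s x <= - s ^ 5 * sin th.
Proof.
  intros Hth Hs Hs0 Hs2 Hx.
  destruct (s_num s Hs0 Hs2) as (N1 & N2 & N3 & N4 & N5).
  assert (HPI := PI_RGT_0).
  assert (Hsth : 0 < sin th) by (apply sin_gt_0; lra).
  unfold ff. destruct (Rle_dec x (PI + th)).
  - set (al := x - PI).
    assert (E1 : sin x = - sin al) by (unfold al; rewrite <- neg_sin; f_equal; ring).
    assert (E2 : sin (x - th) = sin (th - al)) by (unfold al; rewrite <- sin_PI_x; f_equal; ring).
    rewrite E1, E2.
    assert (A1 : 0 <= sin al) by (apply sin_ge_0; unfold al; lra).
    assert (A2 : 0 <= sin (th - al)) by (apply sin_ge_0; unfold al; lra).
    assert (A3 : sin th <= sin al + sin (th - al)).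
    { replace th with (al + (th - al)) at 1 by ring. rewrite sin_plus.
      assert (C1 := COS_bound (th - al)). assert (C2 := COS_bound al). nra. }
    assert (0 < s ^ 5) by (apply pow_lt; auto).
    nra.
  - set (b := 2 * PI - x).
    assert (E1 : sin x = - sin b) by (unfold b; rewrite sin_2PI_minus; ring).
    assert (E2 : sin (x - th) = - sin (b + th)) by (unfold b; rewrite <- sin_2PI_minus; f_equal; ring).
    rewrite E1, E2.
    assert (B1 : sin th <= sin b) by (apply sin_ge_mid; unfold b; lra).
    assert (B2 : 0 <= sin (b - th)) by (apply sin_ge_0; unfold b; lra).
    rewrite sin_minus in B2.
    assert (B3 : s ^ 3 * sin (b + th) <= s ^ 2 * sin b).
    { rewrite sin_plus.
      replace (s ^ 2 * sin b) with (s ^ 3 * (sin b * cos th + sin b * cos th)) 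
        by (transitivity (s ^ 2 * sin b * (2 * s * cos th)); [ring | rewrite Hs; ring]).
      apply Rmult_le_compat_l. left; apply pow_lt; auto. lra. }
    assert (0 < s ^ 5) by (apply pow_lt; auto).
    assert (0 <= 1 - s^2 - s^4 - s^5) by lra.
    nra.
Qed.

Lemma sin_high th y : 0 < th <= PI / 4 -> PI + th <= y <= 2 * PI - th -> sin y <= - sin th.
Proof.
  intros Hth Hy. assert (HPI := PI_RGT_0).
  replace y with (2 * PI - (2 * PI - y)) by ring. rewrite sin_2PI_minus.
  assert (sin th <= sin (2 * PI - y)) by (apply sin_ge_mid; lra). lra.
Qed.

Definition Gk (k : nat) (t : R) :=
  (1 - sv t ^ 4) * sin (INR k * t) - sv t ^ 3 * sin (INR k * t - t) + sv t ^ (k + 1) * sin t.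

Definition dGk (k : nat) (t : R) :=
  - 8 * sv t ^ 5 * sin t * sin (INR k * t) + INR k * (1 - sv t ^ 4) * cos (INR k * t)
  - 6 * sv t ^ 4 * sin t * sin (INR k * t - t) - (INR k - 1) * sv t ^ 3 * cos (INR k * t - t)
  + 2 * INR (k + 1) * sv t ^ (k + 2) * sin t ^ 2 + sv t ^ (k + 1) * cos t.

Lemma Gk_derive k t : 0 < cos t -> is_derive (Gk k) t (dGk k t).
Proof.
  intros H. unfold Gk, sv. auto_derive.
  - repeat split; apply Rgt_not_eq; lra.
  - unfold dGk, sv. replace (Init.Nat.pred (k + 1)) with k by lia.
    rewrite !pow_add. set (P := (/ (2 * cos t)) ^ k).
    replace (INR k * t + - t) with (INR k * t - t) by ring. field. lra.
Qed.

Lemma sqrt2_bd : 1 / sqrt 2 >= 7/10.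
Proof.
  assert (H := Rlt_sqrt2_0). assert (E := sqrt_sqrt 2 ltac:(lra)).
  assert (sqrt 2 < 10/7) by nra.
  apply Rle_ge. apply (Rmult_le_reg_r (sqrt 2)); auto. field_simplify; nra.
Qed.

Lemma s_facts t : 0 < t <= PI / 4 ->
  0 < cos t /\ 2 * sv t * cos t = 1 /\ 0 < sv t /\ sv t ^ 2 <= 1/2 /\ 1/2 <= cos t ^ 2.
Proof.
  intros Ht. assert (HPI := PI_RGT_0).
  assert (Hc : cos (PI / 4) <= cos t) by (apply cos_decr_1; lra).
  rewrite cos_PI4 in Hc. assert (B := sqrt2_bd).
  assert (E := sqrt_sqrt 2 ltac:(lra)). assert (H2 := Rlt_sqrt2_0).
  assert (Hc2 : 1/2 <= cos t ^ 2).
  { assert (1 / sqrt 2 * (1 / sqrt 2) = 1/2).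
    { transitivity (/ (sqrt 2 * sqrt 2)). field. lra. rewrite E. field. }
    nra. }
  assert (Hc0 : 0 < cos t) by lra.
  assert (Hs : 2 * sv t * cos t = 1) by (unfold sv; field; lra).
  assert (Hs0 : 0 < sv t) by (apply sv_pos; auto).
  repeat split; auto. nra.
Qed.

Lemma pow_le_one s n : 0 <= s <= 1 -> s ^ n <= 1.
Proof. intros H. rewrite <- (pow1 n). apply pow_incr. lra. Qed.

Lemma dGk_neg k t : (4 <= k)%nat -> PI / (INR k + 1) <= t <= PI / INR k -> dGk k t < 0.
Proof.
  intros Hk Ht. assert (HPI := PI_RGT_0).
  assert (HK : 4 <= INR k) by (replace 4 with (INR 4) by (simpl; ring); apply le_INR; auto).
  set (K := INR k) in *.
  assert (Kt1 : K * t <= PI) by (apply (Rmult_le_reg_r (/ K)); [apply Rinv_0_lt_compat; lra|];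
     destruct Ht; unfold Rdiv in *; field_simplify; try lra; rewrite Rmult_comm; lra).
  assert (Kt2 : PI <= (K + 1) * t).
  { destruct Ht as [Ht _]. apply (Rmult_le_compat_l (K + 1)) in Ht; [|lra].
    replace ((K + 1) * (PI / (K + 1))) with PI in Ht by (field; lra). lra. }
  assert (Ht0 : 0 < t) by nra.
  assert (Ht4 : t <= PI / 4) by nra.
  destruct (s_facts t (conj Ht0 Ht4)) as (Hc0 & Hs & Hs0 & Hs2 & Hc2).
  destruct (s_num (sv t) Hs0 Hs2) as (N1 & N2 & N3 & N4 & N5).
  set (s := sv t) in *.
  unfold dGk. fold K. fold s.
  set (d := PI - K * t).
  assert (Ed : K * t = PI - d) by (unfold d; ring).
  assert (Ed2 : K * t - t = PI - (d + t)) by (unfold d; ring).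
  assert (Hd0 : 0 <= d) by (unfold d; lra).
  assert (Hd1 : d + t <= PI / 2)
    by (unfold d; lra).
  rewrite Ed2, Ed, !Rtrigo_facts.cos_pi_minus, !sin_PI_x.
  assert (S1 : 0 <= sin d) by (apply sin_ge_0; lra).
  assert (S2 : 0 <= sin (d + t)) by (apply sin_ge_0; lra).
  assert (St : 0 < sin t) by (apply sin_gt_0; lra).
  assert (C1 : cos (d + t) <= cos d) by (apply cos_decr_1; lra).
  assert (C2 : 0 <= cos (d + t)) by (apply cos_ge_0; lra).
  assert (C3 : 7/10 <= cos d).
  { assert (cos (PI / 4) <= cos d) by (apply cos_decr_1; lra).
    rewrite cos_PI4 in H. assert (B := sqrt2_bd). lra. }
  assert (Sn2 : sin t ^ 2 <= 1/2) by (assert (P := sin2_cos2 t); unfold Rsqr in P; nra).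
  assert (Hk4 : (k = 4 + (k - 4))%nat) by lia.
  assert (P1 : s ^ (k - 4) <= 1) by (apply pow_le_one; lra).
  assert (P0 : 0 <= s ^ (k - 4)) by (apply pow_le; lra).
  assert (P6 : s ^ (k + 2) <= 1/8).
  { rewrite Hk4. replace (4 + (k - 4) + 2)%nat with (6 + (k - 4))%nat by lia. rewrite pow_add.
    assert (s ^ 6 <= 1/8) by (replace (s^6) with ((s^2)^3) by ring; 
       assert (0 <= s^2) by nra; nra). 
    assert (0 <= s ^ 6) by (apply pow_le; lra). nra. }
  assert (P5 : s ^ (k + 1) <= 3/16).
  { rewrite Hk4. replace (4 + (k - 4) + 1)%nat with (5 + (k - 4))%nat by lia. rewrite pow_add.
    assert (s ^ 5 <= 3/16).
    { assert (s <= 3/4) by nra. assert (s ^ 4 <= 1/4) by (replace (s^4) with ((s^2)^2) by ring; nra).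
      replace (s^5) with (s^4 * s) by ring. assert (0 <= s^4) by (apply pow_le; lra). nra. }
    assert (0 <= s ^ 5) by (apply pow_le; lra). nra. }
  assert (Q1 : 0 <= s ^ 5 * sin t * sin d) by (apply Rmult_le_pos; [apply Rmult_le_pos|]; try apply pow_le; lra).
  assert (Q2 : 0 <= s ^ 4 * sin t * sin (d + t)) by (apply Rmult_le_pos; [apply Rmult_le_pos|]; try apply pow_le; lra).
  assert (A : 39/100 <= 1 - s ^ 4 - s ^ 3).
  { assert (s <= 7072/10000) by nra. assert (s ^ 4 <= 1/4) by (replace (s^4) with ((s^2)^2) by ring; nra).
    assert (s ^ 3 <= 3536/10000) by (replace (s^3) with (s^2 * s) by ring; nra). lra. }
  assert (Q3 : (K - 1) * s ^ 3 * cos (d + t) <= K * s ^ 3 * cos d).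
  { assert (0 < s ^ 3) by (apply pow_lt; lra).
    assert (s ^ 3 * cos (d + t) <= s ^ 3 * cos d) by nra. nra. }
  assert (Q4 : K * ((1 - s ^ 4 - s ^ 3) * cos d) >= K * (39/100 * (7/10))) by
    (apply Rle_ge; apply Rmult_le_compat_l; [lra|]; nra).
  assert (Q5 : 2 * INR (k + 1) * s ^ (k + 2) * sin t ^ 2 <= (K + 1) / 8).
  { rewrite plus_INR. simpl INR. fold K.
    assert (0 <= s ^ (k + 2)) by (apply pow_le; lra). assert (0 <= sin t ^ 2) by nra.
    assert (s ^ (k + 2) * sin t ^ 2 <= 1/16) by nra. nra. }
  assert (Q6 : s ^ (k + 1) * cos t <= 3/16).
  { assert (0 <= s ^ (k + 1)) by (apply pow_le; lra). assert (cos t <= 1) by (apply COS_bound). nra. }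
  nra.
Qed.

Lemma Gk_decr k e t : (4 <= k)%nat -> PI / (INR k + 1) <= e -> e <= t -> t <= PI / INR k ->
  Gk k t <= Gk k e.
Proof.
  intros Hk H1 H2 H3. destruct (Req_dec e t) as [<-|Hne]; [lra|].
  assert (HK : 4 <= INR k) by (replace 4 with (INR 4) by (simpl; ring); apply le_INR; auto).
  assert (HPI := PI_RGT_0).
  assert (Hb : PI / INR k <= PI / 4) by (apply Rmult_le_compat_l; [lra|]; apply Rinv_le_contravar; lra).
  assert (Ha : 0 < PI / (INR k + 1)) by (apply Rdiv_lt_0_compat; lra).
  assert (L := incr_function_le (fun x => - Gk k x) (Finite (PI / (INR k + 1))) (Finite (PI / INR k))
     (fun x => - dGk k x)).
  cut (- Gk k e < - Gk k t). lra.
  apply L; simpl; try lra.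
  - intros x Hx1 Hx2.
    assert (D := is_derive_opp (Gk k) x (dGk k x) ltac:(apply Gk_derive; destruct (s_facts x) as [? _]; auto; lra)).
    exact D.
  - intros x Hx1 Hx2. assert (dGk k x < 0) by (apply dGk_neg; auto). lra.
Qed.

Definition Goal_in th j :=
  in_co4 (/ (1 - sv th ^ 4) * sv th ^ j * sv th * cos (INR j * th + th),
          - (/ (1 - sv th ^ 4) * sv th ^ j * sv th * sin (INR j * th + th))) (RtoC 0)
         (/ (1 - sv th ^ 4) * sv th ^ j * cos (INR j * th),
          - (/ (1 - sv th ^ 4) * sv th ^ j * sin (INR j * th))) (Wp th (sv th)) (RtoC 1).

Lemma caseZW th j : 0 < th <= PI / 4 -> PI <= INR j * th -> (INR j + 2) * th <= 2 * PI ->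
  ff th (sv th) (INR j * th - th) + sv th ^ j * sin th <= 0 -> Goal_in th j.
Proof.
  intros Hth H1 H2 H3. assert (HPI := PI_RGT_0).
  destruct (s_facts th Hth) as (Hc0 & Hs & Hs0 & Hs2 & Hc2).
  destruct (s_num (sv th) Hs0 Hs2) as (N1 & N2 & N3 & N4 & N5).
  assert (St : 0 < sin th) by (apply sin_gt_0; lra).
  assert (P5 : 0 < sv th ^ 5) by (apply pow_lt; lra).
  unfold Goal_in. apply inZW; auto.
  - apply Rmult_lt_0_compat. apply Rinv_0_lt_compat; lra. apply pow_lt; lra.
  - lra.
  - assert (ff th (sv th) (INR j * th) <= - sv th ^ 5 * sin th) by (apply ff_bound; auto; lra).
    nra.
  - assert (ff th (sv th) (INR j * th + th) <= - sv th ^ 5 * sin th) by (apply ff_bound; auto; lra).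
    nra.
  - replace (/ (1 - sv th ^ 4) * sv th ^ j * (1 - sv th ^ 4)) with (sv th ^ j) by (field; lra).
    exact H3.
Qed.

Lemma phi_ok th j : 0 < th <= PI / 4 -> (5 <= j)%nat -> PI <= INR j * th - th -> INR j * th <= 2 * PI ->
  ff th (sv th) (INR j * th - th) + sv th ^ j * sin th <= 0.
Proof.
  intros Hth Hj H1 H2. assert (HPI := PI_RGT_0).
  destruct (s_facts th Hth) as (Hc0 & Hs & Hs0 & Hs2 & Hc2).
  destruct (s_num (sv th) Hs0 Hs2) as (N1 & N2 & N3 & N4 & N5).
  assert (St : 0 < sin th) by (apply sin_gt_0; lra).
  assert (ff th (sv th) (INR j * th - th) <= - sv th ^ 5 * sin th) by (apply ff_bound; auto; lra).
  assert (sv th ^ j <= sv th ^ 5).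
  { replace j with (5 + (j - 5))%nat by lia. rewrite pow_add.
    assert (sv th ^ (j - 5) <= 1) by (apply pow_le_one; lra).
    assert (0 < sv th ^ 5) by (apply pow_lt; lra). nra. }
  nra.
Qed.

Lemma caseZ1 th j : 0 < th <= PI / 4 -> (5 <= j)%nat -> PI < INR j * th -> (INR j + 1) * th <= 2 * PI ->
  PI + th <= INR j * th - th -> Goal_in th j.
Proof.
  intros Hth Hj H1 H2 H3. assert (HPI := PI_RGT_0).
  destruct (s_facts th Hth) as (Hc0 & Hs & Hs0 & Hs2 & Hc2).
  destruct (s_num (sv th) Hs0 Hs2) as (N1 & N2 & N3 & N4 & N5).
  assert (St : 0 < sin th) by (apply sin_gt_0; lra).
  unfold Goal_in. apply inZ1; auto.
  - apply Rmult_lt_0_compat. apply Rinv_0_lt_compat; lra. apply pow_lt; lra.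
  - lra.
  - apply sin_lt_0; lra.
  - apply sin_le_0; lra.
  - assert (sin (INR j * th - th) <= - sin th) by (apply sin_high; auto; lra).
    assert (sv th ^ j <= sv th ^ 5).
    { replace j with (5 + (j - 5))%nat by lia. rewrite pow_add.
      assert (sv th ^ (j - 5) <= 1) by (apply pow_le_one; lra).
      assert (0 < sv th ^ 5) by (apply pow_lt; lra). nra. }
    assert (/ (1 - sv th ^ 4) * sv th ^ j <= 1).
    { apply (Rmult_le_reg_l (1 - sv th ^ 4)). lra.
      replace ((1 - sv th ^ 4) * (/ (1 - sv th ^ 4) * sv th ^ j)) with (sv th ^ j) by (field; lra). lra. }
    nra.
Qed.

Lemma Phi_eq n t : 0 < cos t -> Phi n t = ff t (sv t) ((INR n - 1) * t) + sv t ^ n * sin t.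
Proof.
  intros H. unfold Phi, ff. rewrite Cmod_a by auto.
  replace ((INR n - 1) * t - t) with ((INR n - 2) * t) by ring. ring.
Qed.

Lemma Gk_ff k t : Gk k t = ff t (sv t) (INR k * t) + sv t ^ (k + 1) * sin t.
Proof. unfold Gk, ff. ring. Qed.

Lemma polys t : 1/2 <= t -> t ^ 2 < 1/2 ->
  1 - 3*t - t^2 + 5*t^3 - t^4 < 0 /\ 1 - 2*t - 2*t^2 + 3*t^3 + t^4 <= 0 /\
  1 - 4*t + 3*t^2 <= 0 /\ 0 <= 1 + t - 4*t^2 + t^3.
Proof.
  intros H1 H2. assert (H3 : t <= 7072/10000) by nra.
  assert (A : 0 <= (t - 1/2) * (7072/10000 - t)) by nra.
  repeat split; nra.
Qed.

Lemma sin_rec th y : sin (y + th) = 2 * sin y * cos th - sin (y - th).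
Proof. rewrite <- sum_sin. ring. Qed.

Lemma case4 th : 0 < cos th -> cos th ^ 2 <= 1/2 -> 0 < sin th -> sv th ^ 4 < 1/2 -> Goal_in th 5.
Proof.
  intros Hc0 Hc2 St Hs4.
  assert (Hs : 2 * sv th * cos th = 1) by (unfold sv; field; lra).
  assert (Hs0 : 0 < sv th) by (apply sv_pos; auto).
  set (s := sv th) in *. set (c1 := cos th) in *. set (S := sin th) in *.
  assert (Ht : 1/2 <= s ^ 2) by nra.
  assert (Ht2 : (s ^ 2) ^ 2 < 1/2) by (replace ((s^2)^2) with (s^4) by ring; lra).
  destruct (polys (s ^ 2) Ht Ht2) as (P1 & P2 & P3 & P4).
  assert (Ec : c1 = / (2 * s)) by (apply (Rmult_eq_reg_l (2 * s)); [|lra]; field_simplify; lra).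
  assert (E2 : sin (2 * th) = S * (2 * c1)).
  { replace (2 * th) with (th + th) by ring. rewrite sin_plus. unfold S, c1. ring. }
  assert (E3 : sin (3 * th) = S * (4 * c1 ^ 2 - 1)).
  { replace (3 * th) with (2 * th + th) by ring. rewrite sin_rec.
    replace (2 * th - th) with th by ring. rewrite E2. fold c1 S. ring. }
  assert (E4 : sin (4 * th) = S * (8 * c1 ^ 3 - 4 * c1)).
  { replace (4 * th) with (3 * th + th) by ring. rewrite sin_rec.
    replace (3 * th - th) with (2 * th) by ring. rewrite E3, E2. fold c1. ring. }
  assert (E5 : sin (5 * th) = S * (16 * c1 ^ 4 - 12 * c1 ^ 2 + 1)).
  { replace (5 * th) with (4 * th + th) by ring. rewrite sin_rec.
    replace (4 * th - th) with (3 * th) by ring. rewrite E4, E3. fold c1. ring. }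
  assert (E6 : sin (6 * th) = S * (32 * c1 ^ 5 - 32 * c1 ^ 3 + 6 * c1)).
  { replace (6 * th) with (5 * th + th) by ring. rewrite sin_rec.
    replace (5 * th - th) with (4 * th) by ring. rewrite E5, E4. fold c1. ring. }
  assert (Hs4' : s ^ 4 < 1) by lra.
  assert (Hs40 : 0 < s ^ 4) by (apply pow_lt; lra).
  unfold Goal_in. fold s. replace (INR 5) with 5 by (simpl; ring).
  assert (Hr : 0 < / (1 - s ^ 4) * s ^ 5) by
    (apply Rmult_lt_0_compat; [apply Rinv_0_lt_compat; lra | apply pow_lt; lra]).
  destruct (Rle_dec (ff th s (5 * th + th)) 0) as [Hf|Hf].
  - apply inZW; auto; try (fold S; lra).
    + unfold ff. replace (5 * th - th) with (4 * th) by ring. rewrite E5, E4, Ec.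
      assert (Q : s ^ 4 * ((1 - s ^ 4) * (16 * (/ (2 * s)) ^ 4 - 12 * (/ (2 * s)) ^ 2 + 1)
                   - s ^ 3 * (8 * (/ (2 * s)) ^ 3 - 4 * / (2 * s)))
                = 1 - 3 * s^2 - (s^2)^2 + 5 * (s^2)^3 - (s^2)^4) by (field; lra).
      set (Qv := (1 - s ^ 4) * (16 * (/ (2 * s)) ^ 4 - 12 * (/ (2 * s)) ^ 2 + 1)
                   - s ^ 3 * (8 * (/ (2 * s)) ^ 3 - 4 * / (2 * s))) in Q.
      assert (Qv < 0) by nra.
      replace ((1 - s ^ 4) * (S * (16 * (/ (2 * s)) ^ 4 - 12 * (/ (2 * s)) ^ 2 + 1)) -
        s ^ 3 * (S * (8 * (/ (2 * s)) ^ 3 - 4 * / (2 * s)))) with (S * Qv) by (unfold Qv; ring).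
      nra.
    + unfold ff. replace (5 * th - th - th) with (3 * th) by ring.
      replace (5 * th - th) with (4 * th) by ring. rewrite E4, E3, Ec.
      replace (/ (1 - s ^ 4) * s ^ 5 * (1 - s ^ 4)) with (s ^ 5) by (field; lra).
      assert (Q : s ^ 3 * ((1 - s ^ 4) * (8 * (/ (2 * s)) ^ 3 - 4 * / (2 * s))
                   - s ^ 3 * (4 * (/ (2 * s)) ^ 2 - 1) + s ^ 5)
                = 1 - 2 * s^2 - 2 * (s^2)^2 + 3 * (s^2)^3 + (s^2)^4) by (field; lra).
      set (Qv := (1 - s ^ 4) * (8 * (/ (2 * s)) ^ 3 - 4 * / (2 * s))
                   - s ^ 3 * (4 * (/ (2 * s)) ^ 2 - 1) + s ^ 5) in Q.
      assert (0 < s ^ 3) by (apply pow_lt; lra).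
      assert (Qv <= 0) by nra.
      fold S. replace ((1 - s ^ 4) * (S * (8 * (/ (2 * s)) ^ 3 - 4 * / (2 * s))) -
        s ^ 3 * (S * (4 * (/ (2 * s)) ^ 2 - 1)) + s ^ 5 * S) with (S * Qv) by (unfold Qv; ring).
      nra.
  - apply inW1; auto; try (fold S; lra).
    + replace (5 * th + th) with (6 * th) by ring. rewrite E6, Ec.
      assert (Q : s ^ 5 * (32 * (/ (2 * s)) ^ 5 - 32 * (/ (2 * s)) ^ 3 + 6 * / (2 * s))
                = 1 - 4 * s^2 + 3 * (s^2)^2) by (field; lra).
      assert (0 < s ^ 5) by (apply pow_lt; lra).
      set (Qv := 32 * (/ (2 * s)) ^ 5 - 32 * (/ (2 * s)) ^ 3 + 6 * / (2 * s)) in *.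
      assert (Qv <= 0) by nra. nra.
    + rewrite E5, Ec.
      assert (Q : (1 - s ^ 4) * (1 + / (1 - s ^ 4) * s ^ 5 * s * (16 * (/ (2 * s)) ^ 4 - 12 * (/ (2 * s)) ^ 2 + 1))
                = 1 + s^2 - 4 * (s^2)^2 + (s^2)^3) by (field; lra).
      set (Qv := 1 + / (1 - s ^ 4) * s ^ 5 * s * (16 * (/ (2 * s)) ^ 4 - 12 * (/ (2 * s)) ^ 2 + 1)) in Q.
      assert (0 <= Qv) by nra.
      fold S. replace (S + / (1 - s ^ 4) * s ^ 5 * s * (S * (16 * (/ (2 * s)) ^ 4 - 12 * (/ (2 * s)) ^ 2 + 1)))
        with (S * Qv) by (unfold Qv; ring).
      nra.
Qed.

Lemma Phi4_root e : 0 < e < PI / 3 -> Phi 4 e = 0 -> sv e ^ 4 = 1/2.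
Proof.
  intros He H. assert (HPI := PI_RGT_0).
  assert (Hc : cos (PI / 3) < cos e) by (apply cos_decreasing_1; lra).
  rewrite cos_PI3 in Hc.
  assert (Hc0 : 0 < cos e) by lra.
  assert (St : 0 < sin e) by (apply sin_gt_0; lra).
  rewrite Phi_eq in H by auto. unfold ff in H.
  replace (INR 4 - 1) with 3 in H by (simpl; ring).
  replace (3 * e - e) with (e + e) in H by ring.
  replace (3 * e) with ((e + e) + e) in H by ring.
  rewrite sin_rec in H. replace (e + e - e) with e in H by ring.
  rewrite sin_plus in H.
  assert (Hs : 2 * sv e * cos e = 1) by (unfold sv; field; lra).
  assert (Hs0 : 0 < sv e) by (apply sv_pos; auto).
  set (s := sv e) in *. set (c := cos e) in *. set (S := sin e) in *.
  assert (Ec : c = / (2 * s)) by (apply (Rmult_eq_reg_l (2 * s)); [|lra]; field_simplify; lra).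
  rewrite Ec in H.
  assert (Hs1 : s < 1) by nra.
  assert (Q : s ^ 2 * ((1 - s ^ 4) * (2 * (S * / (2 * s) + / (2 * s) * S) * / (2 * s) - S) -
      s ^ 3 * (S * / (2 * s) + / (2 * s) * S) + s ^ 4 * S) = S * ((1 - s ^ 2) * (1 - 2 * (s ^ 2) ^ 2)))
    by (field; lra).
  rewrite H in Q. rewrite Rmult_0_r in Q.
  assert (0 < 1 - s ^ 2) by nra.
  assert (1 - 2 * (s ^ 2) ^ 2 = 0).
  { apply (Rmult_eq_reg_l (S * (1 - s ^ 2))). rewrite Rmult_0_r.
    transitivity (S * ((1 - s ^ 2) * (1 - 2 * (s ^ 2) ^ 2))). ring. rewrite <- Q. reflexivity.
    apply Rgt_not_eq. nra. }
  replace (s ^ 4) with ((s ^ 2) ^ 2) by ring. lra.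
Qed.

Lemma le_div_mul a b c : 0 < b -> a / b <= c -> a <= c * b.
Proof. intros Hb H. replace a with (a / b * b) by (field; lra). apply Rmult_le_compat_r; lra. Qed.
Lemma lt_div_mul a b c : 0 < b -> a / b < c -> a < c * b.
Proof. intros Hb H. replace a with (a / b * b) by (field; lra). apply Rmult_lt_compat_r; lra. Qed.
Lemma div_lt_mul a b c : 0 < b -> c < a / b -> c * b < a.
Proof. intros Hb H. replace a with (a / b * b) by (field; lra). apply Rmult_lt_compat_r; lra. Qed.

Ltac natR H := apply le_INR in H; rewrite ?plus_INR, ?mult_INR in H; simpl INR in H.

Theorem lemma5p3 (k : nat) (Hk : (4 <= k)%nat)
  (eta_k eta_k1 : R)
  (Hek : PI / INR k < eta_k < PI / (INR k - 1) /\ Phi k eta_k = 0)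
  (Hek1 : PI / (INR k + 1) < eta_k1 < PI / INR k /\ Phi (k + 1) eta_k1 = 0)
  (eta : R) (Heta : 0 < eta < PI / 3) (j : nat) :
  ((PI / INR k <= eta < eta_k /\ (k + 1 <= j <= 2 * k - 3)%nat) \/
   (eta_k1 <= eta < PI / INR k /\ (k + 1 <= j <= 2 * k - 1)%nat)) ->
  in_co4 (z_ eta j) (RtoC 0) (z_ eta (j - 1)) (w_ eta 1) (RtoC 1) /\
  in_co4 (w_ eta j) (RtoC 1) (w_ eta (j - 1)) (b0_ eta) (a_ eta).
Proof.
  intros H. assert (HPI := PI_RGT_0).
  assert (HK : 4 <= INR k) by (replace 4 with (INR 4) by (simpl; ring); apply le_INR; auto).
  assert (Hcos : 0 < cos eta) by (apply cos_gt_0; lra).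
  assert (Hj1 : (1 <= j)%nat) by (destruct H as [[_ [? _]] | [_ [? _]]]; lia).
  apply reduce; auto. change (Goal_in eta j).
  destruct H as [[He [Hj1' Hj2]] | [He [Hj1' Hj2]]].
  -
    destruct (Nat.eq_dec k 4) as [E4 | Hk5].
    + subst k. assert (j = 5%nat) by lia. subst j.
      destruct Hek as [[Hek1' Hek2] HPhi].
      replace (INR 4) with 4 in * by (simpl; ring).
      assert (Hs := Phi4_root eta_k ltac:(lra) HPhi).
      assert (Hcc : cos eta_k < cos eta) by (apply cos_decreasing_1; lra).
      assert (Hce : 0 < cos eta_k) by (apply cos_gt_0; lra).
      apply case4; auto.
      * assert (cos eta <= cos (PI / 4)) by (apply cos_decr_1; lra).
        rewrite cos_PI4 in H.
        assert (E := sqrt_sqrt 2 ltac:(lra)). assert (H2 := Rlt_sqrt2_0).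
        assert (1 / sqrt 2 * (1 / sqrt 2) = 1/2).
        { transitivity (/ (sqrt 2 * sqrt 2)). field. lra. rewrite E. field. }
        nra.
      * apply sin_gt_0; lra.
      * assert (sv eta < sv eta_k) by (unfold sv; apply Rinv_lt_contravar; nra).
        assert (0 < sv eta) by (apply sv_pos; auto).
        rewrite <- Hs.
        assert (sv eta ^ 2 < sv eta_k ^ 2) by nra.
        replace (sv eta ^ 4) with ((sv eta ^ 2) ^ 2) by ring.
        replace (sv eta_k ^ 4) with ((sv eta_k ^ 2) ^ 2) by ring.
        assert (0 < sv eta ^ 2) by nra. nra.
    + assert (Hk5' : (5 <= k)%nat) by lia.
      assert (HK5 : 5 <= INR k) by (replace 5 with (INR 5) by (simpl; ring); apply le_INR; auto).
      destruct Hek as [[Hek1' Hek2] HPhi].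
      assert (T1 : PI <= eta * INR k) by (apply le_div_mul; lra).
      assert (T2 : eta * (INR k - 1) < PI) by (apply div_lt_mul; lra).
      assert (Th4 : eta <= PI / 4).
      { assert (PI / (INR k - 1) <= PI / 4).
        { apply Rmult_le_compat_l; [lra|]. apply Rinv_le_contravar; lra. }
        lra. }
      assert (Hth : 0 < eta <= PI / 4) by lra.
      destruct (Nat.le_gt_cases j (2 * k - 4)) as [Hj3 | Hj3].
      * assert (Hj3' : (j + 4 <= 2 * k)%nat) by lia. natR Hj3'.
        assert (Hj4 : (k + 1 <= j)%nat) by lia. natR Hj4.
        apply caseZW; auto.
        -- nra.
        -- nra.
        -- apply phi_ok; auto. lia. nra. nra.
      * assert (Hj3' : (j + 3 = 2 * k)%nat) by lia.
        assert (Hj3'' : INR j + 3 = 2 * INR k).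
        { replace 3 with (INR 3) by (simpl; ring). replace 2 with (INR 2) by (simpl; ring).
          rewrite <- plus_INR, <- mult_INR. f_equal. exact Hj3'. }
        apply caseZ1; auto.
        -- lia.
        -- nra.
        -- nra.
        -- nra.
  -
    destruct Hek1 as [[Hek1' Hek2] HPhi].
    assert (T1 : eta * INR k < PI) by (apply div_lt_mul; lra).
    assert (T2 : PI < eta * (INR k + 1)) by (apply lt_div_mul; lra).
    assert (Th4 : eta <= PI / 4).
    { assert (PI / INR k <= PI / 4).
      { apply Rmult_le_compat_l; [lra|]. apply Rinv_le_contravar; lra. }
      lra. }
    assert (Hth : 0 < eta <= PI / 4) by lra.
    destruct (Nat.eq_dec j (k + 1)) as [Ej | Hj3].
    + subst j. apply caseZW; auto.
      * rewrite plus_INR. simpl INR. nra.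
      * rewrite plus_INR. simpl INR. nra.
      * replace (INR (k + 1) * eta - eta) with (INR k * eta) by (rewrite plus_INR; simpl; ring).
        rewrite <- Gk_ff.
        assert (PI / INR k <= PI / 4) by (apply Rmult_le_compat_l; [lra|]; apply Rinv_le_contravar; lra).
        assert (0 < PI / (INR k + 1)) by (apply Rdiv_lt_0_compat; lra).
        assert (Hc1 : 0 < cos eta_k1) by (apply cos_gt_0; lra).
        assert (E : Gk k eta_k1 = 0).
        { rewrite Gk_ff, <- HPhi, Phi_eq by auto. rewrite plus_INR. simpl INR.
          replace (INR k + 1 - 1) with (INR k) by ring. reflexivity. }
        rewrite <- E. apply Gk_decr; auto; lra.
    + destruct (Nat.le_gt_cases j (2 * k - 2)) as [Hj4 | Hj4].
      * assert (Hj4' : (j + 2 <= 2 * k)%nat) by lia. natR Hj4'.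
        assert (Hj5 : (k + 2 <= j)%nat) by lia. natR Hj5.
        apply caseZW; auto.
        -- nra.
        -- nra.
        -- apply phi_ok; auto. lia. nra. nra.
      * assert (Hj3' : (j + 1 = 2 * k)%nat) by lia.
        assert (Hj3'' : INR j + 1 = 2 * INR k).
        { replace 1 with (INR 1) by (simpl; ring). replace 2 with (INR 2) by (simpl; ring).
          rewrite <- plus_INR, <- mult_INR. f_equal. exact Hj3'. }
        apply caseZ1; auto.
        -- lia.
        -- nra.
        -- nra.
        -- nra.
Qed.
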